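(* Let $m\ge 2$ and $1\le\ell<m$. The algorithm that, given an $\ell$-truncated election, returns a candidate with the highest $\mathrm{worst}$ Minimax score (defined in the context) approximates the Minimax rule within a factor of $$\frac{1}{(m-\ell)\left(1+\frac{\ell^2}{m^2-\ell^2-m+\ell}\right)}\ \ge\ \frac{1}{m-\ell/2};$$ that is, for every election $E$, the returned candidate $w$ satisfies $\mathrm{sc}_{\mathrm{MM}}(w)\ge\frac{1}{(m-\ell)\left(1+\frac{\ell^2}{m^2-\ell^2-m+\ell}\right)}\max_{c\in C}\mathrm{sc}_{\mathrm{MM}}(c)$, and moreover $(m-\ell)\left(1+\frac{\ell^2}{m^2-\ell^2-m+\ell}\right)\le m-\ell/2$.
   Context: An election consists of a set $V$ of $n$ voters and a set $C$ of $m$ candidates; each voter $v$ has a strict linear order $\succ_v$ over $C$. For $c,c'\in C$, $\mathrm{sc}_{\mathrm{MM}}(c,c')=|\{v: c\succ_v c'\}|$ and $\mathrm{sc}_{\mathrm{MM}}(c)=\min_{c'\neq c}\mathrm{sc}_{\mathrm{MM}}(c,c')$. In the $\ell$-truncated election each voter reveals only the ordered list of her top $\ell$ candidates. For a voter $v$ and candidates $c\neq d$, write $c\succ_v^t d$ if $c$ is among $v$'s top $\ell$ candidates and either $d$ is not among them or $c\succ_v d$. The worst Minimax score is $\mathrm{worst}(c)=\min_{c'\neq c}|\{v\in V: c\succ_v^t c'\}|$ (the Minimax score of $c$ when $c$ is placed last by every voter not listing it) and the best Minimax score is $\mathrm{best}(c)=\min_{c'\neq c}\big(n-|\{v\in V: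 c'\succ_v^t c\}|\big)$. *)

(* Defs.v *)
From HB Require Import structures.
From mathcomp Require Import all_boot all_order all_algebra all_fingroup.
Set Implicit Arguments. Unset Strict Implicit. Unset Printing Implicit Defensive.

(* Voter v's strict linear order is given by a rank permutation
   [rk v : {perm 'I_m}]: rk v c is the position of c in v's ranking
   (0 = most preferred).  c >_v d  iff  rk v c < rk v d. *)
Definition election (n m : nat) := 'I_n -> {perm 'I_m}.

Section Defs.
Variables (n m : nat) (E : election n m).

Definition prefers (v : 'I_n) (c d : 'I_m) : bool := (E v c < E v d)%N.

Definition sc_pair (c c' : 'I_m) : nat := #|[set v | prefers v c c']|.

(* minimum over c' <> c (well defined as m >= 2; default n is the min of the empty set) *)
Definition sc_MM (c : 'I_m) : nat := \big[minn/n]_(c' | c' != c) sc_pair c c'.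

Variable l : nat.

Definition tprefers (v : 'I_n) (c d : 'I_m) : bool :=
  (E v c < l)%N && (~~ (E v d < l)%N || prefers v c d).

Definition worst (c : 'I_m) : nat :=
  \big[minn/n]_(c' | c' != c) #|[set v | tprefers v c c']|.

Definition best (c : 'I_m) : nat :=
  \big[minn/n]_(c' | c' != c) (n - #|[set v | tprefers v c' c]|).
End Defs.

Local Open Scope ring_scope.
Definition approx_factor (m l : nat) : rat :=
  (m%:R - l%:R) * (1 + (l%:R ^+ 2) / (m%:R ^+ 2 - l%:R ^+ 2 - m%:R + l%:R)).

(* Main.v *)
Require Import Defs.
From HB Require Import structures.
From mathcomp Require Import all_boot all_order all_algebra all_fingroup.
From mathcomp Require Import zify ring lra.
Import Order.TTheory GRing.Theory Num.Theory.
Local Open Scope ring_scope.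

Lemma card_sum (T : finType) (P : pred T) : #|[set x | P x]| = (\sum_x P x)%N.
Proof.
rewrite -sum1dep_card big_mkcond /=; apply: eq_bigr => x _; by case: (P x).
Qed.

Section Aux.
Variables (n m : nat) (E : election n m) (l : nat).

Lemma card_le_n (P : pred 'I_n) : (#|[set v | P v]| <= n)%N.
Proof. by rewrite -[X in (_ <= X)%N]card_ord max_card. Qed.

Lemma bigmin_lb (P : pred 'I_m) F k : (k <= n)%N -> (forall c, P c -> k <= F c)%N ->
  (k <= \big[minn/n]_(c | P c) F c)%N.
Proof.
move=> hk hF; apply: (big_ind (fun x => k <= x)%N) => // x y hx hy.
by rewrite leq_min hx hy.
Qed.

Lemma bigmin_ub (P : pred 'I_m) F c : P c -> (\big[minn/n]_(i | P i) F i <= F c)%N.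
Proof.
move=> hc; rewrite unlock /=.
have : c \in index_enum 'I_m by rewrite mem_index_enum.
elim: (index_enum 'I_m) => //= a r IH; rewrite inE => /orP[/eqP <-|hr].
  by rewrite hc geq_minl.
case: (P a); last exact: IH.
by rewrite geq_min IH ?orbT.
Qed.

Lemma bigmin_le_n (P : pred 'I_m) (F : 'I_m -> nat) : (forall c, F c <= n)%N ->
   (\big[minn/n]_(c | P c) F c <= n)%N.
Proof.
move=> hF; apply: (big_ind (fun x => x <= n)%N) => // x y hx hy; lia.
Qed.

Lemma worst_le_sc c : (worst E l c <= sc_MM E c)%N.
Proof.
rewrite /worst /sc_MM; apply: (big_ind2 (fun a b => a <= b)%N) => //.
  move=> x1 x2 y1 y2 h1 h2; lia.
move=> c' _; apply: subset_leq_card; apply/subsetP=> v.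
rewrite !inE /tprefers /prefers => /andP[h1 /orP[h2|h3]] //.
rewrite -leqNgt in h2; exact: leq_trans h1 h2.
Qed.


Lemma part_a (hm0 : (0 < m)%N) (hl1 : (1 <= l)%N) :
  exists c0, (n <= m * worst E l c0)%N.
Proof.
pose z : 'I_m := Ordinal hm0.
pose top v := (E v)^-1%g z.
pose cnt c := #|[set v | top v == c]|.
have hsum : (\sum_c cnt c = n)%N.
  have -> : n = (\sum_(v : 'I_n) 1)%N by rewrite big_const_ord iter_addn_0 mul1n.
  rewrite (partition_big top predT) //=.
  by apply: eq_bigr => c _; rewrite sum1dep_card.
have [c0 hc0] := bigop.eq_bigmax cnt (ltac:(by rewrite card_ord)).
have hle : (n <= m * cnt c0)%N.
  rewrite -hc0 -{1}hsum.
  apply: (@leq_trans (\sum_(c : 'I_m) \max_i cnt i)).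
    by apply: leq_sum => c _; exact: bigop.leq_bigmax.
  by rewrite big_const_ord iter_addn_0 mulnC.
exists c0; apply: leq_trans hle _; rewrite leq_mul2l; apply/orP; right.
apply: bigmin_lb; first exact: card_le_n.
move=> c' hc'; apply: subset_leq_card; apply/subsetP => v; rewrite !inE.
move=> /eqP htop.
have hE : E v c0 = z by rewrite -htop /top permKV.
have hne : E v c' != E v c0 by rewrite (inj_eq perm_inj).
rewrite /tprefers /prefers hE /=.
have : (nat_of_ord (E v c') != 0)%N.
  apply: contra hne => /eqP h; apply/eqP; apply: val_inj; by rewrite hE /= h.
rewrite hl1 /=; lia.
Qed.

Lemma voter_bound (cs : 'I_m) (v : 'I_n) (hlm : (l <= m)%N) :
  (\sum_(c | c != cs) prefers E v cs c + l * (l <= E v cs) <= m.-1)%N.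
Proof.
have -> : (\sum_(c | c != cs) prefers E v cs c = #|[set c | prefers E v cs c]|)%N.
  by rewrite card_sum [RHS](bigD1 cs) //= /prefers ltnn add0n.
set A := [set c | prefers E v cs c].
case: (leqP l (E v cs)) => hk /=.
  pose B := E v @^-1: [set widen_ord hlm i | i : 'I_l].
  have hB : #|B| = l.
    rewrite card_preimset; last exact: perm_inj.
    by rewrite card_imset ?card_ord //; by move=> a b /(congr1 val) /= /val_inj.
  have hdis : [disjoint A & B].
    rewrite disjoints_subset; apply/subsetP => x; rewrite !inE /prefers => h1.
    apply/imsetP => -[i _ hi].
    have : (nat_of_ord (E v x) < l)%N by rewrite hi /= ltn_ord.
    lia.
  have hc : cs \notin A :|: B.
    rewrite !inE /prefers ltnn /=; apply/imsetP => -[i _ hi].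
    have : (nat_of_ord (E v cs) < l)%N by rewrite hi /= ltn_ord.
    lia.
  have hU : #|A :|: B| = (#|A| + #|B|)%N.
    by apply/eqP; rewrite (leq_card_setU A B).2.
  have := max_card (cs |: (A :|: B)).
  rewrite cardsU1 hc hU hB card_ord /=; lia.
rewrite /= muln0 addn0.
have -> : m.-1 = #|[set~ cs]| by rewrite cardsC1 card_ord.
apply: subset_leq_card; apply/subsetP => c; rewrite !inE /prefers.
by apply: contraL => /eqP ->; rewrite ltnn.
Qed.

Lemma part_c (cs : 'I_m) (hlm : (l <= m)%N) :
  (m.-1 * sc_MM E cs + l * #|[set v | l <= E v cs]| <= m.-1 * n)%N.
Proof.
have hm1 : m.-1 = #|[set c : 'I_m | c != cs]|.
  rewrite (_ : [set c | c != cs] = [set~ cs]) ?cardsC1 ?card_ord //.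
  by apply/setP=> c; rewrite !inE.
have h1 : (m.-1 * sc_MM E cs <= \sum_(c | c != cs) sc_pair E cs c)%N.
  rewrite hm1 -sum_nat_cond_const; apply: leq_sum => c hc; exact: bigmin_ub.
have h2 : (\sum_(c | c != cs) sc_pair E cs c =
           \sum_v \sum_(c | c != cs) prefers E v cs c)%N.
  under eq_bigr => c _ do rewrite /sc_pair card_sum.
  exact: exchange_big.
rewrite card_sum big_distrr /=.
apply: leq_trans (leq_add h1 (leqnn _)) _.
rewrite h2 -big_split /=.
apply: (@leq_trans (\sum_(v : 'I_n) m.-1)).
  by apply: leq_sum => v _; exact: voter_bound.
by rewrite big_const_ord iter_addn_0 mulnC.
Qed.

Lemma part_b (cs w : 'I_m) (hw : (worst E l cs <= worst E l w)%N) :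
  (sc_MM E cs <= #|[set v | l <= E v cs]| + worst E l w)%N.
Proof.
set y := #|[set v | (l <= E v cs)%N]|.
suff : (sc_MM E cs - y <= worst E l cs)%N by lia.
apply: bigmin_lb.
  have : (sc_MM E cs <= n)%N by apply: bigmin_le_n => c; exact: card_le_n.
  lia.
move=> c hc.
have h : (sc_MM E cs <= sc_pair E cs c)%N :=
  @bigmin_ub (fun c' => c' != cs) (sc_pair E cs) c hc.
have h2 : (sc_pair E cs c <= y + #|[set v | tprefers E l v cs c]|)%N.
  rewrite /sc_pair.
  apply: leq_trans (subset_leq_card (_ : _ \subset [set v | (l <= E v cs)%N] :|: [set v | tprefers E l v cs c])) _.
    apply/subsetP => v; rewrite !inE /tprefers => hp.
    by case: leqP => //= hk; rewrite hp orbT.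
  exact: (leq_card_setU _ _).1.
lia.
Qed.

End Aux.

Lemma nat_main (m l n : nat) (E : election n m) (w : 'I_m)
  (hm : (2 <= m)%N) (hl1 : (1 <= l)%N) (hlm : (l < m)%N)
  (hw : forall c : 'I_m, (worst E l c <= worst E l w)%N) :
  ((m + l) * (\max_(c : 'I_m) sc_MM E c) + m * sc_MM E w <=
   (m * m + l) * sc_MM E w + (\max_(c : 'I_m) sc_MM E c))%N.
Proof.
have hm0 : (0 < m)%N by lia.
have [cs ->] := bigop.eq_bigmax (sc_MM E) (ltac:(by rewrite card_ord)).
have [c0 ha] := @part_a n m E l hm0 hl1.
have hb := @part_b n m E l cs w (hw cs).
have hc := @part_c n m E l cs (ltnW hlm).
have hws := @worst_le_sc n m E l w.
have ha' := hw c0.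
move: ha hb hc hws ha'.
set O := sc_MM E cs; set y := #|_|; set W := worst E l w; set S := sc_MM E w.
set W0 := worst E l c0.
move=> ha hb hc hws ha'.
have e1 : (l * O <= l * y + l * W)%N by rewrite -mulnDr leq_mul2l hb orbT.
have e2 : (m.-1 * n <= m.-1 * (m * W))%N.
  by rewrite leq_mul2l (leq_trans ha) ?orbT // leq_mul2l ha' orbT.
have e3 : ((m.-1 * m + l) * W <= (m.-1 * m + l) * S)%N by rewrite leq_mul2l hws orbT.
have [k hk] : exists k, m = k.+1 by exists m.-1; lia.
rewrite hk /= in e2 e3 hc *.
nia.
Qed.

Lemma approx_eq (m l : nat) (hl1 : (1 <= l)%N) (hlm : (l < m)%N) :
  approx_factor m l = (m%:R * m%:R - m%:R + l%:R) / (m%:R + l%:R - 1) :> rat.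
Proof.
have hL : 1 <= l%:R :> rat by rewrite ler1n.
have hML : l%:R + 1 <= m%:R :> rat by rewrite -[1]/(1%:R) -natrD ler_nat addn1.
rewrite /approx_factor; field.
by apply/andP; split; apply: lt0r_neq0; nra.
Qed.

Theorem theorem8 (m l : nat) (hm : (2 <= m)%N) (hl1 : (1 <= l)%N) (hlm : (l < m)%N) :
  (forall (n : nat) (E : election n m) (w : 'I_m),
      (forall c : 'I_m, (worst E l c <= worst E l w)%N) ->
      (approx_factor m l)^-1 * (\max_(c : 'I_m) sc_MM E c)%:R <= (sc_MM E w)%:R :> rat)
  /\ approx_factor m l <= m%:R - l%:R / 2.
Proof.
have hL : 1 <= l%:R :> rat by rewrite ler1n.
have hML : l%:R + 1 <= m%:R :> rat by rewrite -[1]/(1%:R) -natrD ler_nat addn1.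
have hD : 0 < m%:R + l%:R - 1 :> rat by lra.
have hN : 0 < m%:R * m%:R - m%:R + l%:R :> rat by nra.
rewrite approx_eq //; split.
  move=> n E w hw.
  have := @nat_main m l n E w hm hl1 hlm hw.
  rewrite -(ler_nat rat) !natrD !natrM.
  set O := (\max_(c : 'I_m) sc_MM E c)%:R; set S := (sc_MM E w)%:R => h.
  rewrite invf_div mulrAC ler_pdivrMr //.
  nra.
rewrite ler_pdivrMr //; nra.
Qed.
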